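(* Let $x=(x_1,\dots,x_n)$ and $y=(y_1,\dots,y_n)$ be vectors with nonnegative real entries, and assume $y$ is not a permutation of $x$ (i.e., the multisets $\{x_1,\dots,x_n\}$ and $\{y_1,\dots,y_n\}$ differ). Write $\tilde z=(1+z_1,\dots,1+z_n)$ for a vector $z$. If $x\prec_{\log} y$, then $\tilde x\prec_{\mathrm{wlog}}\tilde y$ but $\tilde x\not\prec_{\log}\tilde y$. Consequently, $$\prod_{k=1}^n(1+x_k)<\prod_{k=1}^n(1+y_k).$$ *)

(* Defs.v *)
From HB Require Import structures.
From mathcomp Require Import all_boot all_order all_algebra.
Set Implicit Arguments. Unset Strict Implicit. Unset Printing Implicit Defensive.
Import Order.TTheory GRing.Theory Num.Theory.
Local Open Scope ring_scope.

Definition entries (R : realFieldType) (n : nat) (x : 'I_n -> R) : seq R :=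
  [seq x i | i <- enum 'I_n].

Definition decr (R : realFieldType) (n : nat) (x : 'I_n -> R) : seq R :=
  sort (fun a b => b <= a) (entries x).

Definition topprod (R : realFieldType) (n : nat) (x : 'I_n -> R) (k : nat) : R :=
  \prod_(i < k) nth 0 (decr x) i.

Definition wlogmaj (R : realFieldType) (n : nat) (x y : 'I_n -> R) : Prop :=
  forall k : nat, (1 <= k <= n)%N -> topprod x k <= topprod y k.

Definition logmaj (R : realFieldType) (n : nat) (x y : 'I_n -> R) : Prop :=
  wlogmaj x y /\ topprod x n = topprod y n.

Definition tilde (R : realFieldType) (n : nat) (z : 'I_n -> R) : 'I_n -> R :=
  fun i => 1 + z i.

(* Main.v *)
Require Import Defs.
From HB Require Import structures.
From mathcomp Require Import all_boot all_order all_algebra.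
From mathcomp Require Import ring.
Import Order.TTheory GRing.Theory Num.Theory.
Local Open Scope ring_scope.

Section Aux.
Variable R : realFieldType.

Lemma decomp (a0 : R) (s : seq R) :
  all (fun v => a0 < v) s \/
  exists s1 c s2, s = s1 ++ c :: s2 /\ all (fun v => a0 < v) s1 /\ c <= a0.
Proof.
elim: s => [|c s IH]; first by left.
case: (leP c a0) => hc; first by right; exists [::], c, s.
case: IH => [H|[s1 [d [s2 [-> [H1 H2]]]]]]; first by left; rewrite /= hc H.
by right; exists (c :: s1), d, s2; rewrite /= hc H1 H2.
Qed.

Lemma prod1_ge1 (s : seq R) : all (fun v => 0 <= v) s -> 1 <= \prod_(v <- s) (1 + v).
Proof.
elim: s => [|v s IH] /=; first by rewrite big_nil.
move=> /andP[hv hs]; rewrite big_cons; apply: mulr_ege1; last exact: IH.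
by rewrite lerDl.
Qed.
Arguments prod1_ge1 {s}.

Lemma prod_ge0 (s : seq R) : all (fun v => 0 <= v) s -> 0 <= \prod_(v <- s) v.
Proof.
elim: s => [|v s IH] /=; first by rewrite big_nil.
by move=> /andP[hv hs]; rewrite big_cons mulr_ge0 // IH.
Qed.
Arguments prod_ge0 {s}.

Lemma allprod (c : R) (u v : seq R) : size u = size v ->
  all (fun x => 0 <= x) u -> all (fun x => x <= c) u -> all (fun y => c < y) v ->
  \prod_(x <- u) x <= \prod_(y <- v) y /\
  \prod_(x <- u) (1 + x) <= \prod_(y <- v) (1 + y) /\
  ((0 < size u)%N -> \prod_(x <- u) (1 + x) < \prod_(y <- v) (1 + y)).
Proof.
elim: u v => [|x u IH] [|y v] //=.
move=> [hs] /andP[hx hu] /andP[hxc hu'] /andP[hy hv].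
have [h1 [h2 _]] := IH v hs hu hu' hv.
have hv0 : all (fun x => 0 <= x) v.
  apply/allP => z hz; apply: le_trans (hx) _; apply: le_trans hxc _.
  exact: ltW ((allP hv) z hz).
have hxy : x < y by apply: le_lt_trans hxc hy.
have Pu := prod1_ge1 hu; have Pv := prod1_ge1 hv0.
rewrite !big_cons; split; [|split].
- by apply: ler_pM => //; [exact: prod_ge0|exact: ltW].
- apply: ler_pM => //; first by rewrite addr_ge0.
  + by apply: le_trans Pu.
  + by rewrite lerD2l ltW.
- move=> _; apply: (@le_lt_trans _ _ ((1 + x) * \prod_(y0 <- v) (1 + y0))).
  + by rewrite ler_wpM2l // addr_ge0.
  + by rewrite ltr_pM2r ?ltrD2l // (lt_le_trans ltr01).
Qed.

Lemma step (t a0 c : R) : 1 <= t -> 0 <= c -> c <= a0 ->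
  (1 + a0) * (1 + t * c) <= (1 + t * a0) * (1 + c) /\
  ((1 + a0) * (1 + t * c) = (1 + t * a0) * (1 + c) -> t = 1 \/ c = a0).
Proof.
move=> ht hc hca.
have E : (1 + t * a0) * (1 + c) - (1 + a0) * (1 + t * c) = (t - 1) * (a0 - c) by ring.
split.
- by rewrite -subr_ge0 E mulr_ge0 // subr_ge0.
- move=> /eqP; rewrite eq_sym -subr_eq0 E mulf_eq0 !subr_eq0 => /orP[/eqP->|/eqP->];
  by [left|right].
Qed.

Let ge := fun u v : R => v <= u.

Lemma core (a b : seq R) : size a = size b -> sorted ge a ->
  all (fun v => 0 <= v) a -> all (fun v => 0 <= v) b ->
  (forall m, (m <= size a)%N -> \prod_(v <- take m a) v <= \prod_(v <- take m b) v) ->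
  \prod_(v <- a) (1 + v) <= \prod_(v <- b) (1 + v) /\
  (\prod_(v <- a) (1 + v) = \prod_(v <- b) (1 + v) -> perm_eq a b).
Proof.
elim: a b => [|a0 a' IH] [|b0 bt] //=.
move=> [hs] hsort /andP[ha0 ha'] /andP[hb0 hbt] Hp.
have hsa' : sorted ge a' := path_sorted hsort.
have hall : all (fun v => v <= a0) a'.
  have := order_path_min _ hsort; apply => u v w /= h1 h2; exact: le_trans h2 h1.
have hab : a0 <= b0.
  by have := Hp 1%N isT; rewrite /= !take0 !big_seq1.
case: (decomp a0 bt) => [Hbt|[s1 [c [s2 [Ebt [Hs1 Hc]]]]]].
- have [_ [h2 h3]] := @allprod a0 a' bt hs ha' hall Hbt.
  rewrite !big_cons; split.
    by apply: ler_pM => //; [rewrite addr_ge0|apply: le_trans (prod1_ge1 ha')|rewrite lerD2l].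
  case: a' hs hsort hsa' ha' hall Hp IH h2 h3 => [|d a''] hs _ _ ha' _ _ _ h2 h3.
    case: bt hs hbt Hbt h2 h3 => // _ _ _ _ _; rewrite !big_nil !mulr1 => /addrI ->.
    exact: perm_refl.
  move=> E; exfalso.
  have Pa := prod1_ge1 ha'.
  have : (1 + a0) * \prod_(v <- d :: a'') (1 + v) < (1 + b0) * \prod_(v <- bt) (1 + v).
    apply: (@le_lt_trans _ _ ((1 + b0) * \prod_(v <- d :: a'') (1 + v))).
      by rewrite ler_pM2r ?lerD2l // (lt_le_trans ltr01).
    by rewrite ltr_pM2l ?h3 // (lt_le_trans ltr01) // lerDl.
  by rewrite E ltxx.
- subst bt.
  have hs1 : all (fun v => 0 <= v) s1 by move: hbt; rewrite all_cat => /andP[].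
  have /andP[hc0 hs2] : (0 <= c) && all (fun v => 0 <= v) s2.
    by move: hbt; rewrite all_cat => /andP[_].
  set t := b0 / a0.
  have ht0 : 0 <= t by rewrite divr_ge0.
  have [IHle IHeq] : \prod_(v <- a') (1 + v) <= \prod_(v <- s1 ++ t * c :: s2) (1 + v) /\
    (\prod_(v <- a') (1 + v) = \prod_(v <- s1 ++ t * c :: s2) (1 + v) ->
     perm_eq a' (s1 ++ t * c :: s2)).
    apply: IH => //.
    + by rewrite hs !size_cat.
    + by rewrite all_cat hs1 /= hs2 mulr_ge0.
    + move=> m hm.
      case: (leqP m (size s1)) => hm1.
        rewrite takel_cat //.
        apply: (fun H1 H2 H3 H4 => (@allprod a0 (take m a') (take m s1) H1 H2 H3 H4).1).
        * by rewrite !size_takel // hs size_cat leq_addr ?(leq_trans hm1).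
        * by apply/allP => z /mem_take hz; apply: (allP ha').
        * by apply/allP => z /mem_take hz; apply: (allP hall).
        * by apply/allP => z /mem_take hz; apply: (allP Hs1).
      rewrite take_cat ltnNge (ltnW hm1) /=.
      case E: (m - size s1)%N => [|j]; first by move: hm1; rewrite -subn_gt0 E.
      rewrite /= big_cat big_cons /=.
      case: (eqVneq a0 0) => [a00|a0n0].
        rewrite /t a00 invr0 mulr0 !mul0r mulr0.
        case: a' hs hm hsa' ha' hall {Hp hsort} => [|d a''] hs hm _ ha1 ha2.
          by move: hm hm1 => /=; rewrite leqn0 => /eqP ->; rewrite ltn0.
        move: ha1 ha2 => /= /andP[hd _] /andP[hd' _].
        case: m hm hm1 E => [|m] //= _ _ _.
        have -> : d = 0 by apply/eqP; rewrite eq_le hd andbT -a00.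
        by rewrite big_cons mul0r.
      have a0p : 0 < a0 by rewrite lt_neqAle eq_sym a0n0.
      rewrite -(ler_pM2l a0p).
      have := Hp m.+1 hm; rewrite /= !big_cons take_cat ltnNge (ltnW hm1) /= E /=.
      rewrite big_cat big_cons /=.
      move=> H; apply: (le_trans H) => {H}.
      rewrite le_eqVlt; apply/orP; left; apply/eqP.
      rewrite /t; field; exact: a0n0.
  have ht1 : a0 != 0 -> 1 <= t.
    move=> a0n0; have a0p : 0 < a0 by rewrite lt_neqAle eq_sym a0n0.
    by rewrite /t ler_pdivlMr // mul1r.
  have [Sle Seq] : (1 + a0) * (1 + t * c) <= (1 + b0) * (1 + c) /\
     ((1 + a0) * (1 + t * c) = (1 + b0) * (1 + c) ->
      (a0 = b0 /\ t * c = c) \/ (c = a0 /\ t * c = b0)).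
    case: (eqVneq a0 0) => [a00|a0n0].
      have c0 : c = 0 by apply/eqP; rewrite eq_le hc0 -a00 Hc.
      rewrite /t a00 c0 invr0 !mulr0 !addr0 mul1r mulr1; split; first by rewrite lerDl.
      move=> h; left; split => //; apply: (addrI 1); by rewrite addr0 -h.
    have Eb : b0 = t * a0 by rewrite /t mulfVK.
    have [h1 h2] := @step t a0 c (ht1 a0n0) hc0 Hc.
    split; first by rewrite Eb.
    rewrite Eb => /h2 [->|->]; [left|right]; split => //; by rewrite !mul1r.
  set A' := \prod_(v <- a') (1 + v).
  set P1 := \prod_(v <- s1) (1 + v).
  set P2 := \prod_(v <- s2) (1 + v).
  have hP1 := prod1_ge1 hs1; have hP2 := prod1_ge1 hs2.
  have PP : 0 < P1 * P2 by rewrite mulr_gt0 // (lt_le_trans ltr01).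
  have EB' : \prod_(v <- s1 ++ t * c :: s2) (1 + v) = P1 * ((1 + t * c) * P2)
    by rewrite big_cat big_cons.
  have EB : \prod_(v <- b0 :: s1 ++ c :: s2) (1 + v) = (P1 * P2) * ((1 + b0) * (1 + c)).
    rewrite big_cons big_cat big_cons /= -/P1 -/P2; ring.
  have EA : (1 + a0) * (P1 * ((1 + t * c) * P2)) = (P1 * P2) * ((1 + a0) * (1 + t * c)) by ring.
  have a1p : 0 < 1 + a0 by rewrite (lt_le_trans ltr01) // lerDl.
  have L1 : (1 + a0) * A' <= (1 + a0) * (P1 * ((1 + t * c) * P2)).
    by rewrite ler_pM2l // -EB'.
  have L2 : (1 + a0) * (P1 * ((1 + t * c) * P2)) <= (P1 * P2) * ((1 + b0) * (1 + c)).
    by rewrite EA ler_pM2l.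
  rewrite big_cons EB; split; first exact: le_trans L1 L2.
  move=> Heq.
  have E1 : (1 + a0) * A' = (1 + a0) * (P1 * ((1 + t * c) * P2)).
    apply/eqP; rewrite eq_le L1 /= Heq; exact: L2.
  have E2 : (1 + a0) * (1 + t * c) = (1 + b0) * (1 + c).
    apply: (mulfI (lt0r_neq0 PP)); rewrite -EA -E1 Heq //.
  have hA : A' = \prod_(v <- s1 ++ t * c :: s2) (1 + v).
    by rewrite EB'; apply: (mulfI (lt0r_neq0 a1p)).
  have Hperm := IHeq hA.
  case: (Seq E2) => [[<- htc]|[hca htc]].
    by rewrite perm_cons -htc.
  rewrite htc in Hperm.
  apply: (perm_trans (_ : perm_eq _ (a0 :: s1 ++ b0 :: s2))); first by rewrite perm_cons.
  apply/permP => p /=; rewrite !count_cat /= hca.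
  by rewrite [in LHS](addnCA (count p s1)) addnCA [in RHS](addnCA (count p s1)).
Qed.

End Aux.

Theorem lemma4 (R : realFieldType) (n : nat) (x y : 'I_n -> R)
  (hx : forall i, 0 <= x i) (hy : forall i, 0 <= y i)
  (hperm : ~~ perm_eq (entries x) (entries y))
  (hlog : logmaj x y) :
  wlogmaj (tilde x) (tilde y) /\ ~ logmaj (tilde x) (tilde y) /\
  \prod_(k < n) (1 + x k) < \prod_(k < n) (1 + y k).
Proof.
have sdec : forall z : 'I_n -> R, size (decr z) = n.
  by move=> z; rewrite /decr size_sort /entries size_map size_enum_ord.
have tp : forall (z : 'I_n -> R) k, (k <= n)%N ->
    topprod z k = \prod_(v <- take k (decr z)) v.
  move=> z k hk; rewrite /topprod (big_nth 0) size_takel ?sdec // big_mkord.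
  by apply: eq_bigr => i _; rewrite nth_take.
have dtil : forall z : 'I_n -> R, decr (tilde z) = map (fun v => 1 + v) (decr z).
  move=> z; rewrite /decr /entries /tilde.
  have -> : [seq 1 + z i | i <- enum 'I_n] =
            map (fun v => 1 + v) (map z (enum 'I_n)) by elim: (enum _) => //= ? ? ->.
  by symmetry; apply: (@map_sort _ _ (fun v : R => 1 + v) (fun a b : R => b <= a) (fun a b : R => b <= a)) => u v /=; rewrite lerD2l.
have tpt : forall (z : 'I_n -> R) k, (k <= n)%N ->
    topprod (tilde z) k = \prod_(v <- take k (decr z)) (1 + v).
  by move=> z k hk; rewrite tp // dtil -map_take big_map.
have ps : forall z : 'I_n -> R, perm_eq (decr z) (entries z).
  by move=> z; rewrite /decr perm_sort perm_refl.
have hnn : forall z : 'I_n -> R, (forall i, 0 <= z i) -> all (fun v => 0 <= v) (decr z).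
  move=> z hz; rewrite (perm_all _ (ps z)).
  by apply/allP => v /mapP [i _ ->].
have srt : forall z : 'I_n -> R, sorted (fun u v => v <= u) (decr z).
  by move=> z; apply: sort_sorted => u v; exact: le_total.
have pre : forall m, (m <= n)%N ->
    \prod_(v <- take m (decr x)) v <= \prod_(v <- take m (decr y)) v.
  case=> [|m] hm; first by rewrite !take0 !big_nil.
  by rewrite -!tp //; apply: hlog.1; rewrite hm.
have key : forall k, (k <= n)%N ->
    \prod_(v <- take k (decr x)) (1 + v) <= \prod_(v <- take k (decr y)) (1 + v) /\
    (\prod_(v <- take k (decr x)) (1 + v) = \prod_(v <- take k (decr y)) (1 + v) ->
     perm_eq (take k (decr x)) (take k (decr y))).
  move=> k hk; apply: core.
  - by rewrite !size_takel ?sdec.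
  - exact: take_sorted.
  - by apply/allP => z /mem_take hz; apply: (allP (hnn _ hx)).
  - by apply/allP => z /mem_take hz; apply: (allP (hnn _ hy)).
  - move=> m; rewrite size_takel ?sdec // => hm.
    by rewrite !take_takel //; apply: pre; exact: leq_trans hm hk.
have prodE : forall z : 'I_n -> R,
    \prod_(k < n) (1 + z k) = \prod_(v <- decr z) (1 + v).
  by move=> z; rewrite (perm_big _ (ps z)) /entries big_map big_enum.
have [Kle Keq] := key n (leqnn n).
rewrite !take_oversize ?sdec // in Kle Keq.
have ne : \prod_(v <- decr x) (1 + v) <> \prod_(v <- decr y) (1 + v).
  move=> E; have P := Keq E; move/negP: hperm; apply.
  apply: perm_trans (perm_trans P (ps y)).
  by rewrite perm_sym ps.
split.
  by move=> k /andP[_ hk]; rewrite !tpt //; exact: (key k hk).1.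
split.
  move=> [_ E]; apply: ne; move: E; rewrite !tpt // !take_oversize ?sdec //.
by rewrite !prodE lt_neqAle Kle andbT; apply/eqP.
Qed.
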